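(* Let $a,b,C\in\mathbb{R}$ with $b>1$, $C>0$, and let $(W_k)_{k\ge1}$ be real numbers with $|W_k|<\frac{C\log^a(2k+1)}{k^b}$ for all $k\in\mathbb{N}$. Then $$\lim_{n\to\infty}\sum_{k=1}^{n}|W_k|\left(\frac{2}{\pi}-\frac{n}{2^{4n-2}}\binom{2n}{n}\binom{2n-1}{n-k}\right)=0.$$ *)

(* Defs.v *)
From Stdlib Require Export Reals.
From Coquelicot Require Export Coquelicot.
Open Scope R_scope.

(* Binom n k : the binomial coefficient n choose k, as a real number
   (Stdlib's Binomial.C, valid for k <= n, which is always the case below). *)
Definition Binom (n k : nat) : R := Binomial.C n k.

Definition kern (n k : nat) : R :=
  INR n / 2 ^ (4 * n - 2) * Binom (2 * n) n * Binom (2 * n - 1) (n - k).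

(* Main.v *)
Require Import Defs.
From Stdlib Require Import Reals.
From Coquelicot Require Import Coquelicot.
From Stdlib Require Import Lra Lia Nsatz Factorial.
Open Scope R_scope.

Definition I (n : nat) : R := RInt (fun x => sin x ^ n) 0 (PI/2).

Lemma sinpow_cont n x : continuous (fun x => sin x ^ n) x.
Proof.
  apply (continuous_comp sin (fun y => y ^ n)).
  - apply continuity_pt_filterlim. apply continuity_sin.
  - apply continuity_pt_filterlim. apply derivable_continuous_pt. apply derivable_pt_pow.
Qed.

Lemma ex_I n : ex_RInt (fun x => sin x ^ n) 0 (PI/2).
Proof. apply (@ex_RInt_continuous R_CompleteNormedModule). intros; apply sinpow_cont. Qed.

Lemma I0 : I 0 = PI/2.
Proof. unfold I. simpl. rewrite RInt_const. unfold scal; simpl. unfold mult; simpl. ring. Qed.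

Lemma I1 : I 1 = 1.
Proof.
  unfold I. apply is_RInt_unique.
  replace 1 with (minus (- cos (PI/2)) (- cos 0)).
  2:{ rewrite cos_PI2, cos_0. unfold minus, plus, opp; simpl. ring. }
  apply (@is_RInt_derive R_CompleteNormedModule (fun x => - cos x)).
  - intros. auto_derive. auto. ring.
  - intros. apply sinpow_cont.
Qed.

Lemma Irec n : INR (S (S n)) * I (S (S n)) = INR (S n) * I n.
Proof.
  assert (H : RInt (fun x => minus (scal (INR (S (S n))) (sin x ^ (S (S n))))
                                  (scal (INR (S n)) (sin x ^ n))) 0 (PI/2) = 0).
  { assert (E : minus ((fun x => - cos x * sin x ^ (S n)) (PI/2))
                          ((fun x => - cos x * sin x ^ (S n)) 0) = 0).
    { cbv beta. rewrite cos_PI2, sin_0. unfold minus, plus, opp; simpl. ring. }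
    rewrite <- E at 2. apply is_RInt_unique.
    apply (@is_RInt_derive R_CompleteNormedModule (fun x => - cos x * sin x ^ (S n))).
    - intros x _. auto_derive. auto.
      unfold minus, plus, opp, scal; simpl. unfold mult; simpl.
      pose proof (sin2 x) as S2. unfold Rsqr in S2.
      change (match n with 0%nat => 1 | S _ => INR n + 1 end) with (INR (S n)).
      rewrite S_INR. nsatz.
    - intros. apply (continuous_minus (V:=R_NormedModule)).
      + apply (continuous_scal_r (V:=R_NormedModule)). apply sinpow_cont.
      + apply (continuous_scal_r (V:=R_NormedModule)). apply sinpow_cont. }
  rewrite (@RInt_minus R_CompleteNormedModule) in H.
  2,3: apply (@ex_RInt_scal R_CompleteNormedModule); apply ex_I.
  rewrite !(@RInt_scal R_CompleteNormedModule) in H by apply ex_I.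
  assert (H' : INR (S (S n)) * I (S (S n)) - INR (S n) * I n = 0) by exact H.
  lra.
Qed.

Lemma Imono n : I (S n) <= I n.
Proof.
  unfold I. apply RInt_le.
  - pose proof PI_RGT_0; lra.
  - apply ex_I.
  - apply ex_I.
  - intros x Hx. pose proof PI_RGT_0.
    assert (0 <= sin x) by (apply sin_ge_0; lra).
    assert (sin x <= 1) by apply SIN_bound.
    assert (0 <= sin x ^ n) by (apply pow_le; lra).
    simpl. nra.
Qed.

Lemma Binom_pos n k : (k <= n)%nat -> 0 < Binom n k.
Proof.
  intros. unfold Binom, Binomial.C. apply Rdiv_lt_0_compat.
  apply INR_fact_lt_0. apply Rmult_lt_0_compat; apply INR_fact_lt_0.
Qed.

Lemma Brec m j : (j < m)%nat -> Binom m (S j) * INR (S j) = Binom m j * INR (m - j).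
Proof.
  intros H. destruct (m - j)%nat as [|d] eqn:E; [lia|].
  assert (Hm : m = (j + S d)%nat) by lia. subst m.
  unfold Binom, Binomial.C.
  replace (j + S d - S j)%nat with d by lia.
  replace (j + S d - j)%nat with (S d) by lia.
  assert (F1 : fact (S j) = (S j * fact j)%nat) by reflexivity.
  assert (F2 : fact (S d) = (S d * fact d)%nat) by reflexivity.
  rewrite F1, F2, !mult_INR.
  pose proof (INR_fact_lt_0 j). pose proof (INR_fact_lt_0 d).
  pose proof (pos_INR j). pose proof (pos_INR d).
  rewrite !S_INR. field. split; lra.
Qed.

Definition w (n : nat) : R := Binom (2 * n) n / 2 ^ (2 * n).

Lemma w_pos n : 0 < w n.
Proof. unfold w. apply Rdiv_lt_0_compat. apply Binom_pos; lia. apply pow_lt; lra. Qed.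

Lemma w_rec n : w (S n) * (2 * INR n + 2) = w n * (2 * INR n + 1).
Proof.
  unfold w, Binom, Binomial.C.
  replace (2 * S n - S n)%nat with (S n) by lia.
  replace (2 * n - n)%nat with n by lia.
  replace (2 * S n)%nat with (S (S (2 * n))) by lia.
  assert (F1 : fact (S (S (2*n))) = (S (S (2*n)) * (S (2 * n) * fact (2*n)))%nat) by reflexivity.
  assert (F2 : fact (S n) = (S n * fact n)%nat) by reflexivity.
  rewrite F1, F2, !mult_INR, <- !tech_pow_Rmult.
  pose proof (INR_fact_lt_0 n). pose proof (INR_fact_lt_0 (2*n)).
  pose proof (pos_INR n). assert (0 < 2 ^ (2*n)) by (apply pow_lt; lra).
  rewrite !S_INR, mult_INR. simpl (INR 2). field. repeat split; lra.
Qed.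

Lemma Ieven n : I (2 * n) = PI / 2 * w n.
Proof.
  induction n.
  - simpl. rewrite I0. unfold w, Binom, Binomial.C. simpl. field.
  - replace (2 * S n)%nat with (S (S (2 * n))) by lia.
    pose proof (Irec (2 * n)) as R. pose proof (w_rec n) as W.
    rewrite !S_INR, mult_INR in R. replace (INR 2) with 2 in R by (simpl; ring).
    pose proof (pos_INR n).
    apply (Rmult_eq_reg_l (2 * INR n + 2)); [|lra].
    rewrite IHn in R.
    replace ((2 * INR n + 2) * I (S (S (2 * n)))) with ((2 * INR n + 1 + 1) * I (S (S (2 * n)))) by ring.
    rewrite R.
    replace ((2*INR n+2)*(PI/2*w(S n))) with (PI/2 * (w (S n) * (2*INR n+2))) by ring.
    rewrite W. ring.
Qed.

Lemma Iodd n : I (S (2 * n)) = / ((2 * INR n + 1) * w n).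
Proof.
  induction n.
  - simpl. rewrite I1. unfold w, Binom, Binomial.C. simpl. field.
  - replace (S (2 * S n)) with (S (S (S (2 * n)))) by lia.
    pose proof (Irec (S (2 * n))) as R. pose proof (w_rec n) as W.
    rewrite !S_INR, mult_INR in R. replace (INR 2) with 2 in R by (simpl; ring).
    pose proof (pos_INR n). pose proof (w_pos n). pose proof (w_pos (S n)).
    rewrite IHn in R. rewrite S_INR.
    apply (Rmult_eq_reg_l ((2 * INR n + 3))); [|lra].
    replace ((2 * INR n + 3) * I (S (S (S (2 * n))))) with
      ((2 * INR n + 2) * / ((2 * INR n + 1) * w n)) by lra.
    assert (WS: w (S n) = w n * (2*INR n+1)/(2*INR n+2)).
    { apply (Rmult_eq_reg_r (2*INR n+2)); [rewrite W; field | ]; lra. }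
    rewrite WS. field. repeat split; lra.
Qed.

Lemma divle a b c : 0 < c -> a <= b * c -> a / c <= b.
Proof.
  intros Hc H. unfold Rdiv. apply (Rmult_le_compat_r (/ c)) in H.
  2: { left; apply Rinv_0_lt_compat; auto. }
  rewrite Rmult_assoc, Rinv_r, Rmult_1_r in H; lra.
Qed.

Lemma le_inv a c : 0 < c -> a * c <= 1 -> a <= / c.
Proof.
  intros Hc H. apply (Rmult_le_compat_r (/ c)) in H.
  2: { left; apply Rinv_0_lt_compat; auto. }
  rewrite Rmult_assoc, Rinv_r, Rmult_1_r, Rmult_1_l in H; lra.
Qed.

Lemma wal_lo n : 2 / (PI * (2 * INR n + 1)) <= w n ^ 2.
Proof.
  pose proof (Imono (2 * n)) as H. rewrite Ieven, Iodd in H.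
  pose proof (w_pos n). pose proof (pos_INR n). pose proof PI_RGT_0.
  assert (A : 0 < (2 * INR n + 1) * w n) by nra.
  apply (Rmult_le_compat_l ((2 * INR n + 1) * w n)) in H; [|lra].
  rewrite Rinv_r in H by lra.
  apply divle. nra. nra.
Qed.

Lemma wal_hi m : w (S m) ^ 2 <= / (PI * INR (S m)).
Proof.
  pose proof (Imono (S (2 * m))) as H.
  replace (S (S (2 * m))) with (2 * S m)%nat in H by lia.
  rewrite Ieven, Iodd in H.
  pose proof (w_pos m). pose proof (w_pos (S m)). pose proof (pos_INR m). pose proof PI_RGT_0.
  pose proof (w_rec m) as W.
  replace (/ ((2 * INR m + 1) * w m)) with (/ (w (S m) * (2 * INR m + 2))) in H by (rewrite W; f_equal; ring). rewrite S_INR.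
  assert (A : 0 < w (S m) * (2 * INR m + 2)) by nra.
  apply (Rmult_le_compat_l (w (S m) * (2 * INR m + 2))) in H; [|lra].
  rewrite Rinv_r in H by lra.
  apply le_inv. nra. nra.
Qed.

Lemma kern0 m : kern (S m) 0 = 2 * INR (S m) * w (S m) ^ 2.
Proof.
  unfold kern, w.
  replace (S m - 0)%nat with (S m) by lia.
  replace (2 * S m - 1)%nat with (S (2 * m)) by lia.
  assert (B : Binom (S (2 * m)) (S m) = Binom (2 * S m) (S m) / 2).
  { replace (2 * S m)%nat with (S (S (2 * m))) by lia.
    unfold Binom. rewrite <- (pascal (S (2*m)) m) by lia.
    rewrite (pascal_step1 (S (2 * m)) m) by lia.
    replace (S (2 * m) - m)%nat with (S m) by lia. field. }
  rewrite B.
  replace (4 * S m - 2)%nat with (4 * m + 2)%nat by lia.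
  replace (2 * S m)%nat with (2 * m + 2)%nat by lia.
  assert (P : 2 ^ (2 * m + 2) * 2 ^ (2 * m + 2) = 4 * 2 ^ (4 * m + 2)).
  { rewrite <- pow_add. replace (2 * m + 2 + (2 * m + 2))%nat with (2 + (4 * m + 2))%nat by lia.
    rewrite pow_add. simpl. ring. }
  assert (0 < 2 ^ (2 * m + 2)) by (apply pow_lt; lra).
  assert (0 < 2 ^ (4 * m + 2)) by (apply pow_lt; lra).
  field_simplify_eq; try lra.
  replace ((2 ^ (2 * m + 2)) ^ 2) with (2 ^ (2 * m + 2) * 2 ^ (2 * m + 2)) by ring.
  rewrite P. ring.
Qed.

Lemma kern_nonneg n k : (k <= n)%nat -> 0 <= kern n k.
Proof.
  intros. unfold kern. destruct n as [|n].
  - simpl. unfold Binom, Binomial.C. simpl. lra.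
  - pose proof (pos_INR (S n)). assert (0 < 2 ^ (4 * S n - 2)) by (apply pow_lt; lra).
    pose proof (Binom_pos (2 * S n) (S n)). pose proof (Binom_pos (2 * S n - 1) (S n - k)).
    apply Rmult_le_pos; [apply Rmult_le_pos|].
    + apply Rmult_le_pos; [lra| left; apply Rinv_0_lt_compat; lra].
    + left; apply H2; lia.
    + left; apply H3; lia.
Qed.

Lemma kern_rec n k : (k < n)%nat ->
  kern n (S k) * (INR n + INR k) = kern n k * (INR n - INR k).
Proof.
  intros H. unfold kern.
  pose proof (Brec (2 * n - 1) (n - S k)) as B.
  replace (S (n - S k)) with (n - k)%nat in B by lia.
  replace (2 * n - 1 - (n - S k))%nat with (n + k)%nat in B by lia.
  rewrite plus_INR, minus_INR in B by lia.
  specialize (B ltac:(lia)). nsatz.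
Qed.

Lemma kern_bounds n k : (1 <= n)%nat -> (k <= n)%nat ->
  0 <= kern n k <= kern n 0 /\ kern n 0 * (1 - INR k ^ 2 / INR n) <= kern n k.
Proof.
  intros Hn. induction k; intros Hk.
  - pose proof (kern_nonneg n 0 ltac:(lia)). simpl. split. lra.
    replace (0 * (0 * 1)) with 0 by ring. unfold Rdiv. rewrite Rmult_0_l. lra.
  - destruct (IHk ltac:(lia)) as [[H1 H2] H3].
    pose proof (kern_rec n k ltac:(lia)) as R.
    assert (Hnk : INR k < INR n) by (apply lt_INR; lia).
    pose proof (pos_INR k).
    assert (E : kern n (S k) = kern n k * ((INR n - INR k) / (INR n + INR k))).
    { apply (Rmult_eq_reg_r (INR n + INR k)); [|lra]. rewrite R. field. lra. }
    assert (F0 : 0 <= (INR n - INR k) / (INR n + INR k) <= 1).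
    { split. apply Rmult_le_pos; [lra| left; apply Rinv_0_lt_compat; lra].
      apply divle; lra. }
    rewrite E. split; [split|].
    + nra.
    + nra.
    + assert (G : (1 - INR k ^ 2 / INR n) * ((INR n - INR k) / (INR n + INR k))
                  >= 1 - INR (S k) ^ 2 / INR n).
      { rewrite S_INR. unfold Rdiv.
        apply Rle_ge. apply (Rmult_le_reg_r (INR n * (INR n + INR k))). nra.
        field_simplify; try lra. assert (0 <= INR k ^ 3) by (apply pow_le; lra). nra. }
      assert (H0 : 0 <= kern n 0) by lra.
      apply Rge_le in G.
      apply Rle_trans with (kern n 0 * ((1 - INR k ^ 2 / INR n) * ((INR n - INR k) / (INR n + INR k)))).
      * apply Rmult_le_compat_l; lra.
      * rewrite <- Rmult_assoc. apply Rmult_le_compat_r; lra.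
Qed.


Lemma exple x y : x <= y -> exp x <= exp y.
Proof. intros [H|H]. left; apply exp_increasing; auto. subst; lra. Qed.

Lemma lnle u : 0 < u -> ln u <= u - 1.
Proof. intros. pose proof (exp_ineq1_le (ln u)). rewrite exp_ln in H0; lra. Qed.

Lemma ln_ge0 x : 1 <= x -> 0 <= ln x.
Proof. intros. rewrite <- ln_1. apply ln_le; lra. Qed.

Lemma tele x t : 1 <= x -> 0 < t ->
  exp (- (1 + t) * ln (x + 1)) <= (exp (- t * ln x) - exp (- t * ln (x + 1))) / t.
Proof.
  intros Hx Ht.
  set (L1 := ln x). set (L2 := ln (x + 1)).
  assert (D : 1 / (x + 1) <= L2 - L1).
  { unfold L1, L2. rewrite <- ln_div by lra.
    assert (0 < x / (x + 1)) by (apply Rdiv_lt_0_compat; lra).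
    pose proof (lnle (x / (x + 1)) H). rewrite ln_div in H0 by lra.
    rewrite ln_div by lra.
    assert (x / (x + 1) - 1 = - (1 / (x + 1))) by (field; lra). lra. }
  assert (E1 : exp (- (1 + t) * L2) = exp (- t * L2) / (x + 1)).
  { replace (- (1 + t) * L2) with (- t * L2 + - L2) by ring.
    rewrite exp_plus, exp_Ropp. unfold L2. rewrite exp_ln by lra. reflexivity. }
  assert (E2 : exp (- t * L1) = exp (- t * L2) * exp (t * (L2 - L1))).
  { rewrite <- exp_plus. f_equal. ring. }
  rewrite E1, E2.
  pose proof (exp_ineq1_le (t * (L2 - L1))).
  pose proof (exp_pos (- t * L2)).
  set (P := exp (- t * L2)) in *. set (X := exp (t * (L2 - L1))) in *.
  assert (T : t <= (x + 1) * (X - 1)).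
  { assert (t / (x + 1) <= t * (L2 - L1)).
    { unfold Rdiv. replace (t * / (x + 1)) with (t * (1 / (x + 1))) by (unfold Rdiv; ring).
      apply Rmult_le_compat_l; lra. }
    replace t with ((x + 1) * (t / (x + 1))) at 1 by (field; lra). apply Rmult_le_compat_l; lra. }
  apply divle; [lra|].
  replace ((P * X - P) / t * (x + 1)) with (P * ((x + 1) * (X - 1)) / t) by (field; lra).
  apply Rle_trans with (P * t / t). right; field; lra.
  unfold Rdiv. apply Rmult_le_compat_r. left; apply Rinv_0_lt_compat; lra.
  apply Rmult_le_compat_l; lra.
Qed.

Lemma sum_SmR (a : nat -> R) n m : (n <= S m)%nat ->
  sum_n_m a n (S m) = sum_n_m a n m + a (S m).
Proof. intros. rewrite sum_n_Sm by auto. reflexivity. Qed.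

Lemma sum_le_loc (a b : nat -> R) n m :
  (forall k, (n <= k <= m)%nat -> a k <= b k) -> sum_n_m a n m <= sum_n_m b n m.
Proof.
  intros H. induction m.
  - destruct n.
    + rewrite !sum_n_n. apply H; lia.
    + rewrite !sum_n_m_zero by lia. apply Rle_refl.
  - destruct (Compare_dec.le_lt_dec n (S m)).
    + destruct (Nat.eq_dec n (S m)).
      * subst. rewrite !sum_n_n. apply H; lia.
      * rewrite !sum_SmR by lia.
        apply Rplus_le_compat. apply IHm; intros; apply H; lia. apply H; lia.
    + rewrite !sum_n_m_zero by lia. apply Rle_refl.
Qed.

Lemma sum_const_mul (c : R) (f : nat -> R) n m :
  sum_n_m (fun k => c * f k) n m = c * sum_n_m f n m.
Proof. apply (sum_n_m_mult_l (K:=R_Ring)). Qed.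

Lemma zeta_bound t n : 0 < t -> (1 <= n)%nat ->
  sum_n_m (fun k => exp (- (1 + t) * ln (INR k))) 1 n <= 1 + (1 - exp (- t * ln (INR n))) / t.
Proof.
  intros Ht Hn. induction n. lia.
  destruct n.
  - rewrite sum_n_n. simpl (INR 1). rewrite ln_1, !Rmult_0_r, exp_0. unfold Rdiv. lra.
  - rewrite sum_SmR by lia.
    specialize (IHn ltac:(lia)).
    pose proof (tele (INR (S n)) t) as T.
    rewrite <- (S_INR (S n)) in T.
    assert (1 <= INR (S n)) by (apply (le_INR 1); lia).
    specialize (T H Ht).
    replace (1 + (1 - exp (- t * ln (INR (S (S n))))) / t) with
      ((1 + (1 - exp (- t * ln (INR (S n)))) / t) +
       (exp (- t * ln (INR (S n))) - exp (- t * ln (INR (S (S n))))) / t) by (field; lra).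
    apply Rplus_le_compat. assumption. assumption.
Qed.

Lemma loglog_bound (a d : R) : 0 < d -> exists c, forall k : nat, (1 <= k)%nat ->
  a * ln (ln (2 * INR k + 1)) <= c + d * ln (INR k).
Proof.
  intros Hd.
  assert (Hk1 : forall k : nat, (1 <= k)%nat -> 1 <= INR k) by (intros; apply (le_INR 1); auto).
  assert (Hz : forall k : nat, (1 <= k)%nat -> 1 <= ln (2 * INR k + 1)).
  { intros k Hk. specialize (Hk1 k Hk). apply Rle_trans with (ln (exp 1)); [rewrite ln_exp; lra|]. apply ln_le. apply exp_pos.
    pose proof exp_le_3. lra. }
  destruct (Rle_lt_dec a 0) as [Ha|Ha].
  - exists 0. intros k Hk. specialize (Hz k Hk). specialize (Hk1 k Hk).
    pose proof (ln_ge0 _ Hz). pose proof (ln_ge0 _ Hk1). nra.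
  - set (eta := d / a). assert (He : 0 < eta) by (apply Rdiv_lt_0_compat; lra).
    exists (d * ln 3 - a - a * ln eta). intros k Hk.
    specialize (Hz k Hk). specialize (Hk1 k Hk).
    set (z := ln (2 * INR k + 1)) in *.
    pose proof (lnle (eta * z) ltac:(nra)) as L. rewrite ln_mult in L by lra.
    assert (Z : z <= ln 3 + ln (INR k)).
    { unfold z. rewrite <- ln_mult by lra. apply ln_le; lra. }
    assert (A : a * ln z <= a * (eta * z - 1 - ln eta)) by (apply Rmult_le_compat_l; lra).
    assert (a * eta = d) by (unfold eta; field; lra).
    nra.
Qed.

Lemma W_bound (a b s Cst : R) (W : nat -> R) : s < b -> 0 < Cst ->
  (forall k : nat, (1 <= k)%nat ->
          Rabs (W k) < Cst * Rpower (ln (2 * INR k + 1)) a / Rpower (INR k) b) ->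
  exists M, 0 < M /\ forall k : nat, (1 <= k)%nat -> Rabs (W k) <= M * exp (- s * ln (INR k)).
Proof.
  intros Hs HC hW.
  destruct (loglog_bound a (b - s) ltac:(lra)) as [c Hc].
  exists (Cst * exp c). split. apply Rmult_lt_0_compat; auto; apply exp_pos.
  intros k Hk. specialize (hW k Hk). specialize (Hc k Hk).
  unfold Rpower in hW.
  apply exple in Hc. rewrite exp_plus in Hc.
  left. eapply Rlt_le_trans; [exact hW|].
  apply divle. apply exp_pos.
  rewrite !Rmult_assoc. apply Rmult_le_compat_l; [lra|].
  rewrite <- exp_plus.
  replace (- s * ln (INR k) + b * ln (INR k)) with ((b - s) * ln (INR k)) by ring.
  exact Hc.
Qed.

Lemma kern_err n k : (1 <= k)%nat -> (k <= n)%nat ->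
  0 <= 2 / PI - kern n k <= / INR n + Rmin 1 (INR k ^ 2 / INR n).
Proof.
  intros Hk Hkn. destruct n as [|m]; [lia|].
  destruct (kern_bounds (S m) k ltac:(lia) Hkn) as [[B1 B2] B3].
  rewrite kern0 in B2, B3.
  pose proof (wal_lo (S m)) as L. pose proof (wal_hi m) as H.
  pose proof PI2_1. pose proof (pos_INR m). rewrite S_INR in *.
  set (N := INR m + 1) in *. set (w2 := w (S m) ^ 2) in *.
  assert (HN : 1 <= N) by (unfold N; lra).
  assert (K1 : 2 * N * w2 <= 2 / PI).
  { apply Rle_trans with (2 * N * / (PI * N)). apply Rmult_le_compat_l; lra.
    right; field; lra. }
  assert (K2 : 2 * N * (2 / (PI * (2 * N + 1))) <= 2 * N * w2) by (apply Rmult_le_compat_l; lra).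
  assert (K3 : 2 / PI - 2 * N * (2 / (PI * (2 * N + 1))) <= / N).
  { replace (2 / PI - 2 * N * (2 / (PI * (2 * N + 1)))) with (2 / (PI * (2 * N + 1))) by (field; lra).
    apply divle. nra.
    replace (/ N * (PI * (2 * N + 1))) with (PI * 2 + PI * / N) by (field; lra).
    assert (0 < / N) by (apply Rinv_0_lt_compat; lra). nra. }
  assert (K0 : 2 * N * w2 <= 1) by (apply Rle_trans with (2 / PI); [lra| apply divle; lra]).
  assert (Q0 : 0 <= INR k ^ 2 / N) by (apply Rmult_le_pos; [apply pow2_ge_0| left; apply Rinv_0_lt_compat; lra]).
  assert (D : 2 * N * w2 - kern (S m) k <= Rmin 1 (INR k ^ 2 / N)).
  { apply Rmin_glb. lra.
    assert (2 * N * w2 * (INR k ^ 2 / N) <= INR k ^ 2 / N).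
    { rewrite <- (Rmult_1_l (INR k ^ 2 / N)) at 2. apply Rmult_le_compat_r; lra. }
    nra. }
  split; lra.
Qed.

Lemma min_pow x th : 0 < x -> 0 < th <= 1 -> Rmin 1 x <= exp (th * ln x).
Proof.
  intros Hx Ht. destruct (Rle_lt_dec 1 x).
  - pose proof (ln_ge0 x r). apply Rle_trans with 1. apply Rmin_l.
    rewrite <- exp_0. apply exple. nra.
  - apply Rle_trans with x. apply Rmin_r.
    assert (ln x < 0) by (rewrite <- ln_1; apply ln_increasing; lra).
    apply Rle_trans with (exp (ln x)). rewrite exp_ln; lra. apply exple. nra.
Qed.

Lemma lim_pow c th : 0 < c -> 0 < th -> is_lim_seq (fun n => c * exp (- th * ln (INR n))) 0.
Proof.
  intros Hc Ht. apply is_lim_seq_spec. intros eps.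
  pose proof (cond_pos eps) as He.
  set (A := exp (- ln (eps / c) / th)).
  destruct (INR_unbounded A) as [N0 HN0].
  exists N0. intros n Hn.
  assert (HA : 0 < A) by apply exp_pos.
  assert (Hn' : INR N0 <= INR n) by (apply le_INR; auto).
  assert (L : ln A < ln (INR n)) by (apply ln_increasing; lra).
  unfold A in L. rewrite ln_exp in L.
  assert (L2 : - th * ln (INR n) < ln (eps / c)).
  { apply (Rmult_lt_compat_l th) in L; auto.
    replace (th * (- ln (eps / c) / th)) with (- ln (eps / c)) in L by (field; lra). lra. }
  apply exp_increasing in L2. rewrite exp_ln in L2 by (apply Rdiv_lt_0_compat; lra).
  rewrite Rminus_0_r, Rabs_right.
  2: { apply Rle_ge, Rmult_le_pos; [lra| left; apply exp_pos]. }
  apply (Rmult_lt_compat_l c) in L2; auto.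
  replace (c * (eps / c)) with (pos eps) in L2 by (field; lra). exact L2.
Qed.

Theorem lemma3p6 (a b Cst : R) (W : nat -> R)
  (hb : 1 < b) (hC : 0 < Cst)
  (hW : forall k : nat, (1 <= k)%nat ->
          Rabs (W k) < Cst * Rpower (ln (2 * INR k + 1)) a / Rpower (INR k) b) :
  is_lim_seq
    (fun n : nat => sum_n_m (fun k : nat => Rabs (W k) * (2 / PI - kern n k)) 1 n)
    0.
Proof.
  set (e := Rmin (b - 1) 1).
  assert (He : 0 < e <= 1 /\ e <= b - 1).
  { unfold e. split; [split|]. apply Rmin_glb_lt; lra. apply Rmin_r. apply Rmin_l. }
  set (s := 1 + e / 2). set (th := e / 8). set (t := e / 4).
  destruct (W_bound a b s Cst W ltac:(unfold s; lra) hC hW) as [M [HM HWb]].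
  assert (Ht : 0 < t) by (unfold t; lra).
  assert (Hth : 0 < th <= 1) by (unfold th; lra).
  set (c := 2 * M * (1 + / t)).
  assert (Hc : 0 < c).
  { unfold c. assert (0 < / t) by (apply Rinv_0_lt_compat; lra). nra. }
  apply is_lim_seq_le_le_loc with (u := fun _ => 0) (w := fun n => c * exp (- th * ln (INR n))).
  2: apply is_lim_seq_const.
  2: apply lim_pow; lra.
  exists 1%nat. intros n Hn.
  assert (HN : 1 <= INR n) by (apply (le_INR 1); auto).
  pose proof (ln_ge0 _ HN) as LN.
  set (E := exp (- th * ln (INR n))).
  assert (HE : / INR n <= E).
  { unfold E. rewrite <- exp_ln with (x := INR n) at 1 by lra. rewrite <- exp_Ropp.
    apply exple. nra. }
  assert (HE0 : 0 < / INR n) by (apply Rinv_0_lt_compat; lra).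
  assert (Term : forall k, (1 <= k <= n)%nat ->
     0 <= Rabs (W k) * (2 / PI - kern n k) <=
     M * (/ INR n + E) * exp (- (1 + t) * ln (INR k))).
  { intros k Hk.
    destruct (kern_err n k ltac:(lia) ltac:(lia)) as [D1 D2].
    assert (Hk1 : 1 <= INR k) by (apply (le_INR 1); lia).
    pose proof (ln_ge0 _ Hk1) as LK.
    assert (Q : 0 < INR k ^ 2 / INR n) by (apply Rdiv_lt_0_compat; [apply pow_lt|]; lra).
    pose proof (min_pow _ th Q Hth) as MP.
    rewrite ln_div, ln_pow in MP by (try apply pow_lt; lra).
    replace (INR 2) with 2 in MP by (simpl; ring).
    specialize (HWb k ltac:(lia)).
    pose proof (Rabs_pos (W k)).
    split. apply Rmult_le_pos; lra.
    set (L := ln (INR k)) in *.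
    assert (X1 : exp (- s * L) <= exp (- (1 + t) * L)) by (apply exple; unfold s, t; nra).
    assert (X2 : exp (- s * L) * exp (th * (2 * L - ln (INR n))) = exp (- (1 + t) * L) * E).
    { unfold E. rewrite <- !exp_plus. apply f_equal. unfold s, th, t. lra. }
    pose proof (exp_pos (- s * L)).
    apply Rle_trans with (M * exp (- s * L) * (/ INR n + exp (th * (2 * L - ln (INR n))))).
    - apply Rmult_le_compat; try lra.
    - assert (0 < exp (- (1 + t) * L)) by apply exp_pos.
      assert (exp (- s * L) * / INR n <= exp (- (1 + t) * L) * / INR n) by (apply Rmult_le_compat_r; lra).
      nra. }
  split.
  - replace 0 with (sum_n_m (fun _ : nat => 0) 1 n).
    2: { apply (sum_n_m_const_zero (G:=R_AbelianMonoid)). }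
    apply sum_le_loc. intros k Hk. apply Term; lia.
  - apply Rle_trans with (sum_n_m (fun k => M * (/ INR n + E) * exp (- (1 + t) * ln (INR k))) 1 n).
    + apply sum_le_loc. intros k Hk. apply Term; lia.
    + rewrite sum_const_mul.
      pose proof (zeta_bound t n Ht Hn) as Z.
      assert (0 < exp (- t * ln (INR n))) by apply exp_pos.
      assert (Z2 : sum_n_m (fun k => exp (- (1 + t) * ln (INR k))) 1 n <= 1 + / t).
      { eapply Rle_trans; [exact Z|]. unfold Rdiv.
        assert ((1 - exp (- t * ln (INR n))) * / t <= 1 * / t).
        { apply Rmult_le_compat_r; [left; apply Rinv_0_lt_compat; lra| lra]. }
        lra. }
      assert (0 <= M * (/ INR n + E)) by (apply Rmult_le_pos; lra).
      apply Rle_trans with (M * (/ INR n + E) * (1 + / t)).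
      apply Rmult_le_compat_l; auto.
      unfold c. assert (0 < / t) by (apply Rinv_0_lt_compat; lra).
      assert (M * (/ INR n + E) <= 2 * M * E) by nra.
      fold E. nra.
Qed.
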